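(* Let $C\in\mathbb{R}^{p\times p}$ be positive definite, $w\in\mathbb{R}^p$, $\mu>0$. For $\tau>0$ let $\hat u_\tau\in(-\mu,\mu)^p$ be the unique real solution of $(\mu^2-u_j^2)[C^{-1}(w-u)]_j-u_j/\tau=0$ ($j=1,\dots,p$), and let $\hat x_\tau=C^{-1}(w-\hat u_\tau)$. Let $\hat u=\lim_{\tau\to\infty}\hat u_\tau$ and $\hat x=C^{-1}(w-\hat u)$, and define $I=\{j:\hat x_j\neq0\}$, $I^c_t=\{j\notin I:|\hat u_j|=\mu\}$ and $I^c_{nt}=\{j\notin I:|\hat u_j|<\mu\}$. Then, as $\tau\to\infty$, $$\tau(\mu^2-\hat u_{\tau,j}^2)^2=\begin{cases}O(\tau^{-1}) & j\in I,\\ O\bigl[(\tau\hat x_{\tau,j}^2)^{-1}\bigr] & j\in I^c_t,\\ O(\tau) & j\in I^c_{nt}.\end{cases}$$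
   Context: Standing facts of the setting: $\hat u_\tau\to\hat u$ as $\tau\to\infty$, where $\hat u$ is the unique minimizer of $(w-u)^TC^{-1}(w-u)$ over the box $\{u\in\mathbb{R}^p:|u_j|\le\mu\ \forall j\}$; then $\hat x=C^{-1}(w-\hat u)$ is the unique minimizer of $H(x)=x^TCx-2w^Tx+2\mu\|x\|_1$, and $\hat x_\tau\to\hat x$. $I$ is the set of nonzero coordinates of $\hat x$; $I^c_t$ are the ''transition'' coordinates (zero in $\hat x$ but with $|\hat u_j|=\mu$) and $I^c_{nt}$ the non-transition zero coordinates. *)

(* Defs.v *)
(* real analysis (limits tau -> infinity) over Stdlib R.
   Vectors in R^p are functions nat -> R (only indices < p matter);
   p x p matrices are functions nat -> nat -> R. *)
From Stdlib Require Import Reals Lra Lia.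
Open Scope R_scope.

Fixpoint rsum (n : nat) (f : nat -> R) : R :=
  match n with O => 0 | S k => rsum k f + f k end.

Definition matvec (p : nat) (A : nat -> nat -> R) (v : nat -> R) (i : nat) : R :=
  rsum p (fun k => A i k * v k).

Definition pos_def (p : nat) (C : nat -> nat -> R) : Prop :=
  (forall i j, (i < p)%nat -> (j < p)%nat -> C i j = C j i) /\
  (forall x : nat -> R, (exists i, (i < p)%nat /\ x i <> 0) ->
     rsum p (fun i => x i * matvec p C x i) > 0).

Definition is_inverse (p : nat) (A B : nat -> nat -> R) : Prop :=
  forall i j, (i < p)%nat -> (j < p)%nat ->
    rsum p (fun k => A i k * B k j) = if Nat.eq_dec i j then 1 else 0.

Definition bigO_infty (f g : R -> R) : Prop :=
  exists K T : R, forall tau, tau > T -> Rabs (f tau) <= K * Rabs (g tau).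

(* Main.v *)
Require Import Defs.
From Stdlib Require Import Reals.
Open Scope R_scope.
From Stdlib Require Import Lra Lia.

Lemma rsum_conv (Ci : nat -> nat -> R) (w : nat -> R) (ut : R -> nat -> R) (uh : nat -> R) (p j : nat) :
  (forall j, (j < p)%nat -> forall eps, eps > 0 ->
     exists T, forall tau, tau > T -> Rabs (ut tau j - uh j) < eps) ->
  forall n, (n <= p)%nat -> forall eps, eps > 0 -> exists T, forall tau, tau > T ->
    Rabs (rsum n (fun k => Ci j k * (w k - ut tau k)) - rsum n (fun k => Ci j k * (w k - uh k))) < eps.
Proof.
  intros Hc n. induction n as [|n IH]; intros Hn eps He.
  - exists 0. intros. simpl. rewrite Rminus_0_r, Rabs_R0. lra.
  - destruct (IH ltac:(lia) (eps/2) ltac:(lra)) as [T1 H1].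
    assert (Hp : Rabs (Ci j n) + 1 > 0) by (pose proof (Rabs_pos (Ci j n)); lra).
    destruct (Hc n ltac:(lia) (eps / (2 * (Rabs (Ci j n) + 1)))) as [T2 H2].
    { apply Rlt_gt, Rdiv_lt_0_compat; lra. }
    exists (Rmax T1 T2). intros tau Ht. simpl.
    specialize (H1 tau ltac:(pose proof (Rmax_l T1 T2); lra)).
    specialize (H2 tau ltac:(pose proof (Rmax_r T1 T2); lra)).
    set (A := rsum n (fun k => Ci j k * (w k - ut tau k))) in *.
    set (B := rsum n (fun k => Ci j k * (w k - uh k))) in *.
    replace (A + Ci j n * (w n - ut tau n) - (B + Ci j n * (w n - uh n)))
      with ((A - B) + (- Ci j n) * (ut tau n - uh n)) by ring.
    eapply Rle_lt_trans. apply Rabs_triang.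
    rewrite Rabs_mult, Rabs_Ropp.
    assert (Rabs (Ci j n) * Rabs (ut tau n - uh n) <= eps / 2).
    { apply Rle_trans with ((Rabs (Ci j n) + 1) * (eps / (2 * (Rabs (Ci j n) + 1)))).
      - apply Rmult_le_compat; try apply Rabs_pos; lra.
      - right. field. lra. }
    lra.
Qed.


Theorem lemma2 (p : nat) (C Ci : nat -> nat -> R) (w : nat -> R) (mu : R)
  (ut : R -> nat -> R) (uh : nat -> R) :
  pos_def p C ->
  is_inverse p C Ci ->
  mu > 0 ->
  (* for each tau > 0, ut tau lies in (-mu,mu)^p and solves the system *)
  (forall tau, tau > 0 ->
     (forall j, (j < p)%nat -> - mu < ut tau j < mu) /\
     (forall j, (j < p)%nat ->
        (mu ^ 2 - (ut tau j) ^ 2) * matvec p Ci (fun k => w k - ut tau k) j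
          - ut tau j / tau = 0)) ->
  (* ... and it is the unique such solution *)
  (forall tau (v : nat -> R), tau > 0 ->
     (forall j, (j < p)%nat -> - mu < v j < mu) ->
     (forall j, (j < p)%nat ->
        (mu ^ 2 - (v j) ^ 2) * matvec p Ci (fun k => w k - v k) j - v j / tau = 0) ->
     forall j, (j < p)%nat -> v j = ut tau j) ->
  (* uh = lim_{tau -> infinity} ut tau *)
  (forall j, (j < p)%nat -> forall eps, eps > 0 ->
     exists T, forall tau, tau > T -> Rabs (ut tau j - uh j) < eps) ->
  let xt := fun tau => matvec p Ci (fun k => w k - ut tau k) in
  let xh := matvec p Ci (fun k => w k - uh k) in
  forall j, (j < p)%nat ->
    (* j in I *)
    (xh j <> 0 ->
       bigO_infty (fun tau => tau * (mu ^ 2 - (ut tau j) ^ 2) ^ 2) (fun tau => / tau)) /\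
    (* j in I^c_t : tau (mu^2-u^2)^2 = O((tau x_tau,j^2)^{-1}), stated multiplied out *)
    (xh j = 0 -> Rabs (uh j) = mu ->
       bigO_infty (fun tau => tau * (mu ^ 2 - (ut tau j) ^ 2) ^ 2 * (tau * (xt tau j) ^ 2))
                  (fun _ => 1)) /\
    (* j in I^c_nt *)
    (xh j = 0 -> Rabs (uh j) < mu ->
       bigO_infty (fun tau => tau * (mu ^ 2 - (ut tau j) ^ 2) ^ 2) (fun tau => tau)).
Proof.
  intros HC Hinv Hmu Hsol Huniq Hconv xt xh j Hj.
  assert (Key : forall tau, tau > 0 ->
    (tau * (mu ^ 2 - ut tau j ^ 2)) * xt tau j = ut tau j /\ - mu < ut tau j < mu).
  { intros tau Ht. destruct (Hsol tau Ht) as [Hb He]. split; [|apply Hb; exact Hj].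
    specialize (He j Hj). unfold xt.
    set (x := matvec p Ci (fun k => w k - ut tau k) j) in *.
    assert ((mu ^ 2 - ut tau j ^ 2) * x = ut tau j / tau) by lra.
    replace (tau * (mu ^ 2 - ut tau j ^ 2) * x) with (tau * ((mu ^ 2 - ut tau j ^ 2) * x)) by ring.
    rewrite H. field. lra. }
  split; [|split].
  - intros Hx.
    assert (Hpos : Rabs (xh j) / 2 > 0) by (pose proof (Rabs_pos_lt _ Hx); lra).
    destruct (rsum_conv Ci w ut uh p j Hconv p (le_n p) _ Hpos) as [T HT].
    exists (4 * mu ^ 2 / (xh j ^ 2)), (Rmax T 0). intros tau Ht.
    assert (Ht0 : tau > 0) by (pose proof (Rmax_r T 0); lra).
    specialize (HT tau ltac:(pose proof (Rmax_l T 0); lra)).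
    destruct (Key tau Ht0) as [E B].
    fold (matvec p Ci (fun k => w k - ut tau k) j) in HT.
    fold (matvec p Ci (fun k => w k - uh k) j) in HT.
    fold (xt tau j) in HT. fold (xh j) in HT.
    set (a := tau * (mu ^ 2 - ut tau j ^ 2)) in E.
    set (x := xt tau j) in *. set (y := xh j) in *.
    assert (Hxa : Rabs y / 2 < Rabs x).
    { pose proof (Rabs_triang_inv y x). rewrite Rabs_minus_sym in HT. lra. }
    assert (Hx2 : y ^ 2 / 4 <= x ^ 2).
    { rewrite <- (pow2_abs x), <- (pow2_abs y). pose proof (Rabs_pos y). nra. }
    assert (Hy2 : y ^ 2 > 0) by (rewrite <- pow2_abs; apply pow_lt; lra).
    assert (Ha : a ^ 2 * (y ^ 2 / 4) <= mu ^ 2).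
    { apply Rle_trans with (a ^ 2 * x ^ 2).
      - apply Rmult_le_compat_l; [nra|lra].
      - replace (a ^ 2 * x ^ 2) with ((a * x) ^ 2) by ring. rewrite E. nra. }
    assert (Ha' : a ^ 2 <= 4 * mu ^ 2 / y ^ 2).
    { apply Rmult_le_reg_r with (y ^ 2 / 4). lra.
      replace (4 * mu ^ 2 / y ^ 2 * (y ^ 2 / 4)) with (mu ^ 2) by (field; lra). lra. }
    rewrite (Rabs_right (/ tau)) by (left; apply Rinv_0_lt_compat; lra).
    replace (tau * (mu ^ 2 - ut tau j ^ 2) ^ 2) with (a ^ 2 * / tau) by (unfold a; field; lra).
    rewrite Rabs_right.
    + apply Rmult_le_compat_r; [left; apply Rinv_0_lt_compat; lra | lra].
    + apply Rle_ge; apply Rmult_le_pos; [nra | left; apply Rinv_0_lt_compat; lra].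
  - intros _ _. exists (mu ^ 2), 0. intros tau Ht.
    destruct (Key tau Ht) as [E B].
    rewrite Rabs_R1, Rmult_1_r.
    replace (tau * (mu ^ 2 - ut tau j ^ 2) ^ 2 * (tau * xt tau j ^ 2))
      with ((tau * (mu ^ 2 - ut tau j ^ 2) * xt tau j) ^ 2) by ring.
    rewrite E. rewrite Rabs_right by nra. nra.
  - intros _ _. exists (mu ^ 4), 0. intros tau Ht.
    destruct (Key tau Ht) as [E B].
    assert (0 <= mu ^ 2 - ut tau j ^ 2 <= mu ^ 2) by nra.
    rewrite (Rabs_right tau) by lra.
    assert (H2 : 0 <= (mu ^ 2 - ut tau j ^ 2) ^ 2 <= (mu ^ 2) ^ 2) by nra.
    rewrite Rabs_right by nra.
    replace (mu ^ 4) with ((mu ^ 2) ^ 2) by ring.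
    rewrite (Rmult_comm tau). apply Rmult_le_compat_r; lra.
Qed.
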